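(* Let $\mathbb C$ be a pointed category with finite limits and finite colimits, and let $w\colon W\to A$, $x\colon X\to A$, $y\colon Y\to A$ be morphisms in $\mathbb C$. If $p\colon A_3\to A$ is an internal pregroupoid structure on the span $A/X \leftarrow A \rightarrow A/Y$, then $p\gamma_w\colon (W+X)\times_W(W+Y)\to A$ is an internal multiplication $X\times Y\to A$ over $(W,w)$.
   Context: Notation: $\iota_1,\iota_2,\dots$ denote coproduct injections, $[a,b]$ (resp. $[a,b,c]$) the morphism out of a coproduct with components $a,b$ (resp. $a,b,c$), $\langle a,b\rangle$ the morphism into a (fibred) product with components $a,b$, and $1$, $0$ identity and zero morphisms. $(W+X)\times_W(W+Y)$ denotes the pullback of $[1,0]\colon W+X\to W$ and $[1,0]\colon W+Y\to W$, with projections $\pi_1,\pi_2$. An internal multiplication $X\times Y\to A$ over $(W,w)$ is a morphism $m\colon (W+X)\times_W(W+Y)\to A$ with $m\langle 1,\iota_1[1,0]\rangle=[w,x]\colon W+X\to A$ and $m\langle \iota_1[1,0],1\rangle=[w,y]\colon W+Y\to A$. $A/X$ and $A/Y$ denote the codomains of $\mathsf{coker}(x)$ and $\mathsf{coker}(y)$, and $A_3=A\times_{A/X}A\times_{A/Y}A$ is the limit of $A\xrightarrow{\mathsf{coker}(x)}A/X\xleftarrow{\mathsf{coker}(x)}A\xrightarrow{\mathsf{coker}(y)}A/Y\xleftarrow{\mathsf{coker}(y)}A$, with three projections to $A$. $\gamma_w\colon (W+X)\times_W(W+Y)\to A_3$ is the morphism $\langle [w,x]\pi_1,[w,0]\pi_1,[w,y]\pi_2\rangle$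 (note $[w,0]\pi_1=[w,0]\pi_2$). An internal pregroupoid structure on the span $A/X\leftarrow A\to A/Y$ (the two legs being $\mathsf{coker}(x)$ and $\mathsf{coker}(y)$) is a morphism $p\colon A_3\to A$ such that $p\langle\pi_1,\pi_2,\pi_2\rangle=\pi_1$ as morphisms $A\times_{A/X}A\to A$ and $p\langle \pi_1,\pi_1,\pi_2\rangle=\pi_2$ as morphisms $A\times_{A/Y}A\to A$, where $\pi_1,\pi_2$ denote the kernel-pair projections. *)

(* Defs.v *)
Set Implicit Arguments.
Unset Strict Implicit.

Record Category := {
  Ob :> Type;
  Hom : Ob -> Ob -> Type;
  idm : forall A, Hom A A;
  comp : forall A B C, Hom B C -> Hom A B -> Hom A C;
  comp_assoc : forall A B C D (h : Hom C D) (g : Hom B C) (f : Hom A B),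
      comp h (comp g f) = comp (comp h g) f;
  comp_id_l : forall A B (f : Hom A B), comp (idm B) f = f;
  comp_id_r : forall A B (f : Hom A B), comp f (idm A) = f
}.

Arguments Hom {c} _ _.
Arguments idm {c} A.
Arguments comp {c A B C} _ _.
Notation "g \o f" := (comp g f) (at level 40, left associativity).

(* A pointed category with finite limits and finite colimits, presented by
   chosen universal constructions: a zero object (initial and terminal),
   pullbacks (with the terminal object these give all finite limits),
   binary coproducts and coequalizers (with the initial object these give
   all finite colimits).  Mediating morphisms are total functions whose
   defining equations and uniqueness are required whenever the relevant
   cone/cocone condition holds. *)
Record PointedFinBicomplete := {
  cat :> Category;
  zero_ob : cat;
  to_zero : forall A : cat, Hom A zero_ob;
  from_zero : forall A : cat, Hom zero_ob A;
  to_zero_uniq : forall (A : cat) (f : Hom A zero_ob), f = to_zero A;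
  from_zero_uniq : forall (A : cat) (f : Hom zero_ob A), f = from_zero A;
  coprod : cat -> cat -> cat;
  inj1 : forall A B : cat, Hom A (coprod A B);
  inj2 : forall A B : cat, Hom B (coprod A B);
  copair : forall (A B C : cat), Hom A C -> Hom B C -> Hom (coprod A B) C;
  copair_inj1 : forall A B C (f : Hom A C) (g : Hom B C),
      copair f g \o inj1 A B = f;
  copair_inj2 : forall A B C (f : Hom A C) (g : Hom B C),
      copair f g \o inj2 A B = g;
  copair_uniq : forall A B C (f : Hom A C) (g : Hom B C) (u : Hom (coprod A B) C),
      u \o inj1 A B = f -> u \o inj2 A B = g -> u = copair f g;
  pb : forall (A B C : cat), Hom A C -> Hom B C -> cat;
  pb1 : forall A B C (f : Hom A C) (g : Hom B C), Hom (pb f g) A;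
  pb2 : forall A B C (f : Hom A C) (g : Hom B C), Hom (pb f g) B;
  pb_comm : forall A B C (f : Hom A C) (g : Hom B C), f \o pb1 f g = g \o pb2 f g;
  pbpair : forall A B C (f : Hom A C) (g : Hom B C) (D : cat),
      Hom D A -> Hom D B -> Hom D (pb f g);
  pbpair_1 : forall A B C (f : Hom A C) (g : Hom B C) D (h : Hom D A) (k : Hom D B),
      f \o h = g \o k -> pb1 f g \o pbpair f g h k = h;
  pbpair_2 : forall A B C (f : Hom A C) (g : Hom B C) D (h : Hom D A) (k : Hom D B),
      f \o h = g \o k -> pb2 f g \o pbpair f g h k = k;
  pbpair_uniq : forall A B C (f : Hom A C) (g : Hom B C) D (h : Hom D A) (k : Hom D B)
      (u : Hom D (pb f g)),
      f \o h = g \o k -> pb1 f g \o u = h -> pb2 f g \o u = k -> u = pbpair f g h k;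
  coeq_ob : forall (A B : cat), Hom A B -> Hom A B -> cat;
  coeq : forall A B (f g : Hom A B), Hom B (coeq_ob f g);
  coeq_comm : forall A B (f g : Hom A B), coeq f g \o f = coeq f g \o g;
  coeq_desc : forall A B (f g : Hom A B) (C : cat), Hom B C -> Hom (coeq_ob f g) C;
  coeq_desc_comm : forall A B (f g : Hom A B) C (h : Hom B C),
      h \o f = h \o g -> coeq_desc f g h \o coeq f g = h;
  coeq_desc_uniq : forall A B (f g : Hom A B) C (h : Hom B C) (u : Hom (coeq_ob f g) C),
      h \o f = h \o g -> u \o coeq f g = h -> u = coeq_desc f g h
}.

Arguments inj1 {p} A B.
Arguments inj2 {p} A B.
Arguments copair {p A B C} _ _.
Arguments pb {p A B C} _ _.
Arguments pb1 {p A B C} _ _.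
Arguments pb2 {p A B C} _ _.
Arguments pbpair {p A B C} _ _ {D} _ _.
Arguments coeq_ob {p A B} _ _.
Arguments coeq {p A B} _ _.

Section Constructions.
Variable C : PointedFinBicomplete.

Definition zmor (A B : C) : Hom A B := from_zero B \o to_zero A.

Definition fold10 (W X : C) : Hom (coprod W X) W := copair (idm W) (zmor X W).

Definition PBWXY (W X Y : C) : C := pb (fold10 W X) (fold10 W Y).
Definition piL (W X Y : C) : Hom (PBWXY W X Y) (coprod W X) := pb1 _ _.
Definition piR (W X Y : C) : Hom (PBWXY W X Y) (coprod W Y) := pb2 _ _.

Definition internal_multiplication (W X Y A : C)
    (w : Hom W A) (x : Hom X A) (y : Hom Y A) (m : Hom (PBWXY W X Y) A) : Prop :=
  m \o pbpair (fold10 W X) (fold10 W Y) (idm (coprod W X)) (inj1 W Y \o fold10 W X)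
    = copair w x /\
  m \o pbpair (fold10 W X) (fold10 W Y) (inj1 W X \o fold10 W Y) (idm (coprod W Y))
    = copair w y.

Definition coker (X A : C) (x : Hom X A) : Hom A (coeq_ob x (zmor X A)) :=
  coeq x (zmor X A).

Definition KP (A B : C) (f : Hom A B) : C := pb f f.

(* A_3 = A x_{A/X} A x_{A/Y} A, the limit of
   A -> A/X <- A -> A/Y <- A, built as an iterated pullback of kernel pairs *)
Section A3.
Variables (X Y A : C) (x : Hom X A) (y : Hom Y A).
Definition KX := KP (coker x).
Definition KY := KP (coker y).
Definition A3 : C := pb (pb2 (coker x) (coker x)) (pb1 (coker y) (coker y)).
Definition p3_1 : Hom A3 A := pb1 (coker x) (coker x) \o pb1 _ _.
Definition p3_2 : Hom A3 A := pb2 (coker x) (coker x) \o pb1 _ _.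
Definition p3_3 : Hom A3 A := pb2 (coker y) (coker y) \o pb2 _ _.
Definition triple (D : C) (a b c : Hom D A) : Hom D A3 :=
  pbpair (pb2 (coker x) (coker x)) (pb1 (coker y) (coker y))
    (pbpair (coker x) (coker x) a b) (pbpair (coker y) (coker y) b c).

Definition pregroupoid (p : Hom A3 A) : Prop :=
  p \o triple (pb1 (coker x) (coker x)) (pb2 (coker x) (coker x))
              (pb2 (coker x) (coker x)) = pb1 (coker x) (coker x) /\
  p \o triple (pb1 (coker y) (coker y)) (pb1 (coker y) (coker y))
              (pb2 (coker y) (coker y)) = pb2 (coker y) (coker y).
End A3.

Definition gamma (W X Y A : C) (w : Hom W A) (x : Hom X A) (y : Hom Y A)
    : Hom (PBWXY W X Y) (A3 x y) :=
  triple x y (copair w x \o piL W X Y) (copair w (zmor X A) \o piL W X Y)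
             (copair w y \o piR W X Y).

End Constructions.

(* Main.v *)
Require Import Defs.

Section H.
Variable C : PointedFinBicomplete.

Lemma copair_comp (P Q R S : C) (f : Hom R S) (g : Hom P R) (h : Hom Q R) :
  f \o copair g h = copair (f \o g) (f \o h).
Proof.
  apply copair_uniq.
  - rewrite <- comp_assoc, copair_inj1; reflexivity.
  - rewrite <- comp_assoc, copair_inj2; reflexivity.
Qed.

Lemma zmor_l (P Q R : C) (f : Hom Q R) : f \o zmor P Q = zmor P R.
Proof.
  unfold zmor. rewrite comp_assoc. f_equal. apply from_zero_uniq.
Qed.

Lemma zmor_r (P Q R : C) (f : Hom P Q) : zmor Q R \o f = zmor P R.
Proof.
  unfold zmor. rewrite <- comp_assoc. f_equal. apply to_zero_uniq.
Qed.

Lemma copair_w0 (W X A : C) (w : Hom W A) :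
  copair w (zmor X A) = w \o fold10 W X.
Proof.
  unfold fold10. rewrite copair_comp, comp_id_r, zmor_l. reflexivity.
Qed.

Lemma pbpair_comp (P Q R D E : C) (f : Hom P R) (g : Hom Q R) (h : Hom D P) (k : Hom D Q)
  (u : Hom E D) : f \o h = g \o k ->
  pbpair f g h k \o u = pbpair f g (h \o u) (k \o u).
Proof.
  intro H. apply pbpair_uniq.
  - rewrite !comp_assoc, H; reflexivity.
  - rewrite comp_assoc, pbpair_1; auto.
  - rewrite comp_assoc, pbpair_2; auto.
Qed.

Lemma coker_zero (X A : C) (x : Hom X A) : coker x \o x = coker x \o zmor X A.
Proof. apply coeq_comm. Qed.

Lemma triple_comp (X Y A D E : C) (x : Hom X A) (y : Hom Y A) (a b c : Hom D A)
  (u : Hom E D) :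
  coker x \o a = coker x \o b -> coker y \o b = coker y \o c ->
  triple x y a b c \o u = triple x y (a \o u) (b \o u) (c \o u).
Proof.
  intros H1 H2. unfold triple.
  refine (eq_trans (pbpair_comp _ _ _ _ _ _ _ _ _ _ _) _).
  - rewrite pbpair_2, pbpair_1; auto.
  - f_equal; apply pbpair_comp; auto.
Qed.
End H.

Theorem theorem1p3 (C : PointedFinBicomplete) (W X Y A : C)
    (w : Hom W A) (x : Hom X A) (y : Hom Y A) (p : Hom (A3 x y) A) :
  pregroupoid p ->
  internal_multiplication w x y (p \o gamma w x y).
Proof.
  intros [HX HY].
  assert (Ex : coker x \o copair w x = coker x \o copair w (zmor X A)).
  { rewrite !copair_comp, coker_zero. reflexivity. }
  assert (Ey : coker y \o copair w y = coker y \o copair w (zmor Y A)).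
  { rewrite !copair_comp, coker_zero. reflexivity. }
  assert (Epb : fold10 W X \o piL W X Y = fold10 W Y \o piR W X Y).
  { apply pb_comm. }
  assert (G1 : coker x \o (copair w x \o piL W X Y)
             = coker x \o (copair w (zmor X A) \o piL W X Y)).
  { rewrite !comp_assoc, Ex. reflexivity. }
  assert (G2 : coker y \o (copair w (zmor X A) \o piL W X Y)
             = coker y \o (copair w y \o piR W X Y)).
  { rewrite !comp_assoc, Ey, !copair_w0, <- !comp_assoc, Epb. reflexivity. }
  unfold internal_multiplication, gamma. split.
  - set (s := pbpair _ _ _ _).
    assert (Hc : fold10 W X \o idm (coprod W X)
                 = fold10 W Y \o (inj1 W Y \o fold10 W X)).
    { unfold fold10 at 2. rewrite comp_id_r, comp_assoc, copair_inj1, comp_id_l. reflexivity. }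
    assert (L : piL W X Y \o s = idm _) by (apply pbpair_1; exact Hc).
    assert (R : piR W X Y \o s = inj1 W Y \o fold10 W X) by (apply pbpair_2; exact Hc).
    rewrite <- comp_assoc, triple_comp by assumption.
    rewrite <- !comp_assoc, L, R, !comp_id_r, comp_assoc, copair_inj1, <- copair_w0.
    set (a := copair w x). set (b := copair w (zmor X A)).
    assert (K : triple x y a b b =
      triple x y (pb1 (coker x) (coker x)) (pb2 (coker x) (coker x))
                 (pb2 (coker x) (coker x)) \o pbpair (coker x) (coker x) a b).
    { rewrite triple_comp.
      - rewrite pbpair_1, pbpair_2; auto.
      - apply pb_comm.
      - reflexivity. }
    rewrite K, comp_assoc, HX, pbpair_1; auto.
  - set (s := pbpair _ _ _ _).
    assert (Hc : fold10 W X \o (inj1 W X \o fold10 W Y)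
                 = fold10 W Y \o idm (coprod W Y)).
    { unfold fold10 at 1. rewrite comp_id_r, comp_assoc, copair_inj1, comp_id_l. reflexivity. }
    assert (L : piL W X Y \o s = inj1 W X \o fold10 W Y) by (apply pbpair_1; exact Hc).
    assert (R : piR W X Y \o s = idm _) by (apply pbpair_2; exact Hc).
    rewrite <- comp_assoc, triple_comp by assumption.
    rewrite <- !comp_assoc, L, R, !comp_id_r, !comp_assoc, !copair_inj1, <- copair_w0.
    set (c := copair w y). set (b := copair w (zmor Y A)).
    assert (K : triple x y b b c =
      triple x y (pb1 (coker y) (coker y)) (pb1 (coker y) (coker y))
                 (pb2 (coker y) (coker y)) \o pbpair (coker y) (coker y) b c).
    { rewrite triple_comp.
      - rewrite pbpair_1, pbpair_2; auto.
      - reflexivity.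
      - apply pb_comm. }
    rewrite K, comp_assoc, HY, pbpair_2; auto.
Qed.
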